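(* Consider a D2D caching network with $K$ users each of cache size $M$ files, of which $S$ are selfish, and a library of $N$ files, encoded with an MDS code of rate $r\in(0,1)$ that is a real positive root of $\sum_{i=0}^{K-S-1}\binom{K-S}{i}(-\frac{M}{N})^{K-S-i}r^{K-S-1-i}+1$ (with $\frac{M(K-S)}{N}>1$), using the random caching scheme and delivery procedure described in the context. Then the following rate is achievable: $$R(M)=\frac{1}{r}\sum_{i=2}^{K}\mathsf{R}(i)\Big(\frac{Mr}{N}\Big)^{i-1}\Big(1-\frac{Mr}{N}\Big)^{K-i+1},$$ where $$\mathsf{R}(i)=\sum_{j=0}^{i-2}\binom{S}{j}\binom{K-S}{i-j}\frac{i-j}{i-j-1}+(K-S)\binom{S}{i-1}.$$
   Context: Network: $K$ users in mutual range, no server; $S$ selfish users cache content but never transmit; all users receive all transmissions; each user $u$ requests an arbitrary file $\omega_u$ (arbitrary request vector). Rate = total number of transmitted bits divided by the file size $B$. Caching: each file of $B$ bits is split into $I$ subfiles (symbols of $\mathbb{F}_{2^{B/I}}$) and encoded with an $(I,I/r)$ MDS code (any $I$ of the $I/r$ encoded symbols recover the file); each user independently, for each file, caches a uniformly random set of $MI/N$ of the $I/r$ encoded symbols. For a file $\omega$ and a set $\mathcal{P}$ of users, $\Gamma_{\omega,\mathcal{P}}$ denotes the block of encoded symbols of $\omega$ cached by exactly the users in $\mathcal{P}$; its length is taken to be its typical value $(\frac{Mr}{N})^{|\mathcal{P}|}(1-\frac{Mr}{N})^{K-|\mathcal{P}|}\frac{I}{r}$ symbols (law of large numbers, large $I$).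 XOR of blocks of unequal length is done after zero-padding the shorter ones. A $\frac1f$-segment of a block is one of $f$ disjoint equal-length parts; segments sent by different users are disjoint if they have different offsets. Delivery: for every subset $\mathsf{U}\subseteq\mathcal{U}$ with $|\mathsf{U}|\in\{K,K-1,\dots,2\}$ containing at least one non-selfish user, let $\mathcal{T}$ be its set of non-selfish users, $\mathsf{t}=|\mathcal{T}|$. If $\mathsf{t}=1$, the unique $u\in\mathcal{T}$ transmits $\bigoplus_{v\in\mathsf{U},v\ne u}\Gamma_{\omega_v,\mathsf{U}\setminus\{v\}}$. If $\mathsf{t}\ge2$, pick any $u^*\in\mathcal{T}$; $u^*$ transmits a disjoint $\frac{1}{\mathsf{t}-1}$-segment of $\bigoplus_{u\in\mathcal{T},u\ne u^*}\Gamma_{\omega_u,\mathsf{U}\setminus\{u\}}$, and each $u\in\mathcal{T}\setminus\{u^*\}$ transmits a disjoint $\frac{1}{\mathsf{t}-1}$-segment of $\bigoplus_{v\in\mathsf{U},v\ne u}\Gamma_{\omega_v,\mathsf{U}\setminus\{v\}}$. Achievability means that with this scheme every user recovers its requested file for every request vector, with total rate $R(M)$. *)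

(* Defs.v *)
(* Idealised ("typical block length") model of the D2D
   coded-caching scheme with selfish users. *)
From mathcomp Require Import all_boot all_order all_algebra.
Set Implicit Arguments. Unset Strict Implicit. Unset Printing Implicit Defensive.
Import Order.TTheory GRing.Theory Num.Theory.
Local Open Scope ring_scope.

Section Scheme.
Variables (K N : nat) (Sel : {set 'I_K}) (omega : 'I_K -> 'I_N)
          (ustar : {set 'I_K} -> 'I_K).

(* A term of an XOR: a (1/parts)-segment, with index offset, of the block
   Gamma_{file, P}:  (file, P, parts, offset). *)
Definition term := ('I_N * {set 'I_K} * nat * nat)%type.
Definition tfile (x : term) : 'I_N := x.1.1.1.
Definition tset (x : term) : {set 'I_K} := x.1.1.2.
Definition tparts (x : term) : nat := x.1.2.
Definition toff (x : term) : nat := x.2.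

(* A transmission: (sender, list of XORed terms) *)
Definition transmission := ('I_K * seq term)%type.

Definition nonselfish (U : {set 'I_K}) : {set 'I_K} := U :\: Sel.

Definition tx_of (U : {set 'I_K}) : seq transmission :=
  let T := nonselfish U in
  let t := #|T| in
  let us := ustar U in
  if t == 1%N then
    [:: (us, [seq (omega v, U :\ v, 1%N, 0%N) | v <- enum (U :\ us)])]
  else
    let Tr := enum (T :\ us) in
    (us, [seq (omega w, U :\ w, t.-1, index w Tr) | w <- Tr])
    :: [seq (u, [seq (omega v, U :\ v, t.-1, index u Tr) | v <- enum (U :\ u)])
       | u <- Tr].

Definition served_sets : seq {set 'I_K} :=
  [seq U : {set 'I_K} <- enum [set: {set 'I_K}] | (2 <= #|U|)%N && (nonselfish U != set0)].

Definition delivery : seq transmission := flatten [seq tx_of U | U <- served_sets].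

(* user u caches Gamma_{f,P} (for every file f) iff u \in P.
   u decodes term x of tx iff x occurs in tx and u caches every other term. *)
Definition decodes (u : 'I_K) (tx : transmission) (x : term) : bool :=
  (x \in tx.2) && all (fun y => (y == x) || (u \in tset y)) tx.2.

Definition all_parts : seq nat := [seq tparts x | x <- flatten [seq tx.2 | tx <- delivery]].

(* user u knows the whole block Gamma_{f,P}: cached, or all p disjoint
   1/p-segments decoded from the transmissions. *)
Definition recovered (u : 'I_K) (f : 'I_N) (P : {set 'I_K}) : bool :=
  (u \in P) ||
  has (fun p => (0 < p)%N &&
        all (fun k => has (fun tx => decodes u tx (f, P, p, k)) delivery) (iota 0 p))
      all_parts.

Variables (R : realFieldType) (q r I : R).

(* typical length (in symbols) of Gamma_{omega,P}, q = M r / N *)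
Definition blen (P : {set 'I_K}) : R := q ^+ #|P| * (1 - q) ^+ (K - #|P|) * (I / r).

Definition known (u : 'I_K) : R :=
  \sum_(P : {set 'I_K} | recovered u (omega u) P) blen P.

(* length of a transmission (zero padding: max of the segment lengths) *)
Definition tx_len (tx : transmission) : R :=
  \big[Num.max/0]_(x <- tx.2) (blen (tset x) / (tparts x)%:R).

(* rate = transmitted bits / B = transmitted symbols / I *)
Definition rate : R := (\sum_(tx <- delivery) tx_len tx) / I.

End Scheme.

Section Formula.
Variables (R : realFieldType) (K S N : nat) (M r : R).

Definition root_poly : R :=
  \sum_(i < K - S) ('C(K - S, i))%:R * (- (M / N%:R)) ^+ (K - S - i)
                     * r ^+ (K - S - 1 - i) + 1.

Definition Rcoef (i : nat) : R :=
  \sum_(0 <= j < i.-1) ('C(S, j) * 'C(K - S, i - j))%:R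
                          * ((i - j)%:R / (i - j - 1)%:R)
  + (K - S)%:R * ('C(S, i.-1))%:R.

Definition rate_formula : R :=
  let q := M * r / N%:R in
  r^-1 * \sum_(2 <= i < K.+1) Rcoef i * q ^+ i.-1 * (1 - q) ^+ (K - i + 1).
End Formula.

(* Main.v *)
Require Import Defs.
From mathcomp Require Import all_boot all_order all_algebra zify ring lra.
Import Order.TTheory GRing.Theory Num.Theory.
Local Open Scope ring_scope.


Lemma sum_by_card (R : realFieldType) (T : finType) (P : pred {set T})
  (f : {set T} -> nat) (g : nat -> R) (n : nat) :
  (forall U, P U -> (f U <= n)%N) ->
  \sum_(U | P U) g (f U) = \sum_(k < n.+1) (#|[set U | P U & f U == k]|)%:R * g k.
Proof.
move=> hf.
rewrite (partition_big (fun U => (inord (f U) : 'I_n.+1)) predT) //=.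
apply: eq_bigr => k _.
rewrite mulr_natl -sumr_const.
apply: eq_big => U.
  rewrite inE; apply/andP/andP => [[hP /eqP <-]|[hP /eqP e]]; split => //.
    by rewrite inordK // ltnS hf.
  by apply/eqP/val_inj; rewrite /= inordK // ltnS hf.
move=> /andP[hP /eqP <-]; by rewrite inordK // ltnS hf.
Qed.

Lemma sum_subset (R : realFieldType) (K : nat) (A : {set 'I_K}) (g : nat -> R) :
  \sum_(P : {set 'I_K} | P \subset A) g #|P| = \sum_(k < K.+1) ('C(#|A|, k))%:R * g k.
Proof.
rewrite (@sum_by_card R _ (fun P : {set 'I_K} => P \subset A) (fun P => #|P|) g K).
  by apply: eq_bigr => k _; rewrite cards_draws.
by move=> U _; rewrite -[X in (_ <= X)%N](card_ord K) max_card.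
Qed.

Lemma binom_sum (R : realFieldType) (K a : nat) (q : R) : (a <= K)%N ->
  \sum_(k < K.+1) ('C(a, k))%:R * (q ^+ k * (1 - q) ^+ (K - k)) = (1 - q) ^+ (K - a).
Proof.
move=> haK.
rewrite -(big_mkord xpredT (fun k => ('C(a, k))%:R * (q ^+ k * (1 - q) ^+ (K - k)))).
rewrite (big_cat_nat _ (n:=a.+1)) //=.
rewrite [X in _ + X]big1_seq ?addr0; last first.
  move=> k /andP[_]; rewrite mem_index_iota => /andP[hk _].
  by rewrite bin_small // mul0r.
have E : forall i, (0 <= i < a.+1)%N -> ('C(a, i))%:R * (q ^+ i * (1 - q) ^+ (K - i))
   = (1 - q) ^+ (K - a) * ((1 - q) ^+ (a - i) * q ^+ i *+ 'C(a, i)).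
  move=> i /andP[_ hi].
  have -> : (K - i = (K - a) + (a - i))%N by rewrite ltnS in hi; lia.
  rewrite exprD -mulr_natl; ring.
rewrite (eq_big_nat _ _ E) -big_distrr /=.
by rewrite big_mkord -exprDn subrK expr1n mulr1.
Qed.
Lemma rec_of_dec (K N : nat) (Sel : {set 'I_K}) (omega : 'I_K -> 'I_N)
  (ustar : {set 'I_K} -> 'I_K) u f P p :
  (0 < p)%N ->
  (forall k, (k < p)%N -> exists2 tx, tx \in delivery Sel omega ustar &
       decodes u tx (f, P, p, k)) ->
  recovered Sel omega ustar u f P.
Proof.
move=> p0 H; apply/orP; right; apply/hasP; exists p.
  have [tx htx /andP[hx _]] := H 0%N p0.
  apply/mapP; exists (f, P, p, 0%N) => //.
  by apply/flatten_mapP; exists tx.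
rewrite p0 /=; apply/allP => k; rewrite mem_iota add0n => /andP[_ hk].
by have [tx htx hd] := H k hk; apply/hasP; exists tx.
Qed.

Lemma dec_common (K N : nat) (omega : 'I_K -> 'I_N) (U : {set 'I_K}) (s : seq 'I_K)
  (snd : 'I_K) (u : 'I_K) (p o : nat) :
  u \in U -> u \in s ->
  decodes u (snd, [seq (omega v, U :\ v, p, o) | v <- s]) (omega u, U :\ u, p, o).
Proof.
move=> hu hs; apply/andP; split; first by apply/mapP; exists u.
apply/allP => y /mapP [v hv ->]; case: (eqVneq v u) => [->|hvu]; first by rewrite eqxx.
by apply/orP; right; rewrite /tset /= in_setD1 hu andbT eq_sym.
Qed.

Lemma dec_star (K N : nat) (omega : 'I_K -> 'I_N) (U : {set 'I_K}) (s : seq 'I_K)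
  (snd : 'I_K) (u : 'I_K) (p : nat) :
  u \in U -> u \in s ->
  decodes u (snd, [seq (omega v, U :\ v, p, index v s) | v <- s])
     (omega u, U :\ u, p, index u s).
Proof.
move=> hu hs; apply/andP; split; first by apply/mapP; exists u.
apply/allP => y /mapP [v hv ->]; case: (eqVneq v u) => [->|hvu]; first by rewrite eqxx.
by apply/orP; right; rewrite /tset /= in_setD1 hu andbT eq_sym.
Qed.

Lemma good_recovered (K N : nat) (Sel : {set 'I_K}) (omega : 'I_K -> 'I_N)
  (ustar : {set 'I_K} -> 'I_K) (u : 'I_K) (P : {set 'I_K}) :
  (forall U, nonselfish Sel U != set0 -> ustar U \in nonselfish Sel U) ->
  u \notin P -> ~~ (P \subset Sel) -> recovered Sel omega ustar u (omega u) P.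
Proof.
move=> hstar huP /subsetPn [x hxP hxS].
set U := u |: P.
have huU : u \in U by rewrite !inE eqxx.
have hUP : U :\ u = P by rewrite /U setU1K.
have hxT : x \in nonselfish Sel U by rewrite /nonselfish !inE hxS hxP orbT.
have hT : nonselfish Sel U != set0 by apply/set0Pn; exists x.
have hU2 : (2 <= #|U|)%N.
  rewrite /U cardsU1 huP add1n ltnS card_gt0; by apply/set0Pn; exists x.
have hserved : U \in served_sets Sel by rewrite mem_filter mem_enum in_setT hU2 hT.
have hdel : forall tx, tx \in tx_of Sel omega ustar U -> tx \in delivery Sel omega ustar.
  by move=> tx htx; apply/flatten_mapP; exists U.
have husT := hstar U hT.
set us := ustar U in husT.
have husU : us \in U by move: husT; rewrite /nonselfish inE => /andP[].
rewrite -hUP.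
case: (eqVneq #|nonselfish Sel U| 1%N) => ht.
  apply: (@rec_of_dec K N Sel omega ustar u (omega u) (U :\ u) 1%N) => // k; rewrite ltnS leqn0 => /eqP ->.
  have hu_us : u \in U :\ us.
    rewrite in_setD1 huU andbT; apply/eqP => e.
    have /cards1P [y hy] : #|nonselfish Sel U| == 1%N by apply/eqP.
    move: hxT husT; rewrite hy !inE => /eqP hxy /eqP hus.
    by move: huP; rewrite e hus -hxy hxP.
  exists (us, [seq (omega v, U :\ v, 1%N, 0%N) | v <- enum (U :\ us)]).
    by apply: hdel; rewrite /tx_of ht eqxx mem_seq1.
  by apply: dec_common => //; rewrite mem_enum.
set Tr := enum (nonselfish Sel U :\ us).
have hsz : size Tr = (#|nonselfish Sel U|).-1.
  by rewrite /Tr -cardE (cardsD1 us (nonselfish Sel U)) husT.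
have ht2 : (1 < #|nonselfish Sel U|)%N.
  by move: hT; rewrite -card_gt0 => h; lia.
apply: (@rec_of_dec K N Sel omega ustar u (omega u) (U :\ u) ((#|nonselfish Sel U|).-1)); first by lia.
move=> k hk.
have hkTr : (k < size Tr)%N by rewrite hsz.
set w := nth u Tr k.
have hwTr : w \in Tr by apply: mem_nth.
have hidx : index w Tr = k by rewrite index_uniq // /Tr enum_uniq.
have hwU : w \in U.
  by move: hwTr; rewrite mem_enum /nonselfish !inE => /and3P[].
have htx : tx_of Sel omega ustar U =
  (us, [seq (omega w, U :\ w, (#|nonselfish Sel U|).-1, index w Tr) | w <- Tr])
    :: [seq (u, [seq (omega v, U :\ v, (#|nonselfish Sel U|).-1, index u Tr) | v <- enum (U :\ u)])
       | u <- Tr].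
  by rewrite /tx_of (negbTE ht).
case: (eqVneq w u) => hwu.
  exists (us, [seq (omega w, U :\ w, (#|nonselfish Sel U|).-1, index w Tr) | w <- Tr]).
    by apply: hdel; rewrite htx mem_head.
  rewrite -hidx hwu; apply: dec_star => //; by rewrite -hwu.
exists (w, [seq (omega v, U :\ v, (#|nonselfish Sel U|).-1, index w Tr) | v <- enum (U :\ w)]).
  apply: hdel; rewrite htx in_cons; apply/orP; right.
  by apply/mapP; exists w.
rewrite -hidx; apply: dec_common => //.
by rewrite mem_enum in_setD1 eq_sym hwu huU.
Qed.

Lemma blen_subset (K : nat) (R : realFieldType) (q r I : R) (A : {set 'I_K}) :
  \sum_(P : {set 'I_K} | P \subset A) blen q r I P = (1 - q) ^+ (K - #|A|) * (I / r).
Proof.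
rewrite /blen.
rewrite (@sum_subset R K A (fun k => q ^+ k * (1 - q) ^+ (K - k) * (I / r))).
under eq_bigr do rewrite mulrA.
rewrite -big_distrl /= binom_sum //.
by rewrite -[X in (_ <= X)%N](card_ord K) max_card.
Qed.

Lemma known_ge (K N : nat) (Sel : {set 'I_K}) (omega : 'I_K -> 'I_N)
  (ustar : {set 'I_K} -> 'I_K) (R : realFieldType) (q r I : R) (S : nat) (u : 'I_K) :
  #|Sel| = S -> 0 <= q -> q <= 1 -> 0 < r -> 0 < I ->
  1 - (1 - q) ^+ (K - S) = r ->
  (forall U, nonselfish Sel U != set0 -> ustar U \in nonselfish Sel U) ->
  I <= known Sel omega ustar q r I u.
Proof.
move=> hS q0 q1 r0 I0 hroot hstar.
have bl0 : forall P : {set 'I_K}, 0 <= blen q r I P.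
  move=> P; rewrite /blen; apply: mulr_ge0; last by apply: divr_ge0; apply: ltW.
  by apply: mulr_ge0; apply: exprn_ge0; rewrite ?subr_ge0.
pose good (P : {set 'I_K}) := (u \in P) || ~~ (P \subset Sel).
have step1 : \sum_(P | good P) blen q r I P <= known Sel omega ustar q r I u.
  rewrite /known big_mkcond [X in _ <= X]big_mkcond /=; apply: ler_sum => P _.
  case hg: (good P); last by case: ifP.
  suff -> : recovered Sel omega ustar u (omega u) P by [].
  move: hg; rewrite /good; case/orP => h; first by rewrite /recovered h.
  case huP: (u \in P); first by rewrite /recovered huP.
  by apply: good_recovered => //; rewrite huP.
have tot : \sum_(P : {set 'I_K}) blen q r I P = I / r.
  transitivity (\sum_(P : {set 'I_K} | P \subset [set: 'I_K]) blen q r I P).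
    by apply: eq_bigl => P; rewrite subsetT.
  by rewrite blen_subset cardsT card_ord subnn expr0 mul1r.
have bad : \sum_(P | ~~ good P) blen q r I P = (1 - q) ^+ (K - #|Sel :\ u|) * (I / r).
  rewrite -blen_subset; apply: eq_bigl => P.
  by rewrite /good negb_or negbK subsetD1 andbC.
have hle : (1 - q) ^+ (K - #|Sel :\ u|) <= (1 - q) ^+ (K - S).
  apply: ler_wiXn2l; rewrite ?subr_ge0 ?lerBlDr ?lerDl //.
  rewrite -hS; apply: leq_sub2l; exact: subset_leq_card (subD1set Sel u).
apply: le_trans step1.
have e : \sum_(P : {set 'I_K}) blen q r I P =
    \sum_(P | good P) blen q r I P + \sum_(P | ~~ good P) blen q r I P by apply: bigID.
rewrite tot bad in e.
have -> : \sum_(P | good P) blen q r I P = I / r - (1 - q) ^+ (K - #|Sel :\ u|) * (I / r).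
  by apply/eqP; rewrite eq_sym subr_eq; apply/eqP.
apply: (@le_trans _ _ (I / r - (1 - q) ^+ (K - S) * (I / r))); last first.
  by apply: lerB => //; apply: ler_wpM2r => //; apply: divr_ge0; apply: ltW.
rewrite -{1}[I / r]mul1r -mulrBl hroot mulrCA divff ?mulr1 //.
by apply: lt0r_neq0.
Qed.


Lemma splitAB {K : nat} {Sel A B : {set 'I_K}} :
  A \subset Sel -> B \subset ~: Sel ->
  (A :|: B) :&: Sel = A /\ (A :|: B) :&: ~: Sel = B.
Proof.
move=> hA hB; split; apply/setP => x; rewrite !inE.
  case xA: (x \in A); first by rewrite /= (subsetP hA x xA).
  case xB: (x \in B) => //=; have := subsetP hB x xB; rewrite inE => /negbTE ->.
  by [].
case xB: (x \in B); first by have := subsetP hB x xB; rewrite inE orbT => ->.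
case xA: (x \in A) => //=; by rewrite (subsetP hA x xA).
Qed.

Lemma count_split (K : nat) (Sel : {set 'I_K}) (i j : nat) : (j <= i)%N ->
  #|[set U : {set 'I_K} | (#|U| == i) & (#|U :&: Sel| == j)]|
    = ('C(#|Sel|, j) * 'C(K - #|Sel|, i - j))%N.
Proof.
move=> hji.
set D := setX [set A : {set 'I_K} | A \subset Sel & #|A| == j]
              [set B : {set 'I_K} | B \subset ~: Sel & #|B| == (i - j)%N].
have -> : [set U : {set 'I_K} | (#|U| == i) & (#|U :&: Sel| == j)]
        = [set p.1 :|: p.2 | p in D].
  apply/setP => U; rewrite inE; apply/andP/imsetP.
  - move=> [/eqP hi /eqP hj]; exists (U :&: Sel, U :&: ~: Sel).
      rewrite !inE /= subsetIr hj eqxx subsetIr /=.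
      have := cardsID Sel U; rewrite setDE hj hi => e.
      by rewrite -e addKn.
    by rewrite /= -setDE setID.
  - case=> [[A B]] /setXP [] /=; rewrite !inE => /andP[hA /eqP hAj] /andP[hB /eqP hBj] ->.
    have [e1 e2] := splitAB hA hB.
    rewrite e1 hAj eqxx; split => //.
    have hAB : A :&: B = set0.
      apply/setP => x; rewrite !inE; apply/negbTE/negP => /andP[xA xB].
      by have := subsetP hB x xB; rewrite inE (subsetP hA x xA).
    have := cardsUI A B; rewrite hAB cards0 addn0 hAj hBj => ->.
    by rewrite subnKC.
rewrite card_in_imset; last first.
  move=> [A1 B1] [A2 B2]; rewrite !inE /= => /andP[/andP[hA1 _] /andP[hB1 _]]
    /andP[/andP[hA2 _] /andP[hB2 _]] e.
  have [e1 e2] := splitAB hA1 hB1; have [e3 e4] := splitAB hA2 hB2.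
  move: e => /= e; congr (_, _); [by rewrite -e1 -e3 e | by rewrite -e2 -e4 e].
rewrite cardsX !cards_draws.
have := cardsC Sel; rewrite card_ord => e.
by have -> : #|~: Sel| = (K - #|Sel|)%N by lia.
Qed.


Lemma max_const (R : realFieldType) (T : eqType) (s : seq T) (F : T -> R) (c : R) :
  0 <= c -> (forall x, x \in s -> F x = c) -> (0 < size s)%N ->
  \big[Num.max/0]_(x <- s) F x = c.
Proof.
move=> c0; elim: s => [//|x s IH] hF _.
rewrite big_cons hF ?mem_head //.
case: s IH hF => [|y s] IH hF; first by rewrite big_nil max_l.
rewrite IH ?maxxx // => z hz; apply: hF; by rewrite in_cons hz orbT.
Qed.

Lemma sum_const_seq (R : realFieldType) (T : eqType) (s : seq T) (F : T -> R) (c : R) :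
  (forall x, x \in s -> F x = c) -> \sum_(x <- s) F x = c *+ size s.
Proof.
elim: s => [|x s IH] hF; first by rewrite big_nil.
rewrite big_cons hF ?mem_head // IH ?mulrS // => z hz; apply: hF.
by rewrite in_cons hz orbT.
Qed.

Definition cfac (R : realFieldType) (t : nat) : R :=
  if t == 1%N then 1 else t%:R / (t.-1)%:R.

Definition bl (K : nat) {R : realFieldType} (q r I : R) (k : nat) : R :=
  q ^+ k * (1 - q) ^+ (K - k) * (I / r).

Lemma tx_sum (K N : nat) (Sel : {set 'I_K}) (omega : 'I_K -> 'I_N)
  (ustar : {set 'I_K} -> 'I_K) (R : realFieldType) (q r I : R) (U : {set 'I_K}) :
  0 <= q -> q <= 1 -> 0 < r -> 0 < I ->
  (2 <= #|U|)%N -> nonselfish Sel U != set0 -> ustar U \in nonselfish Sel U ->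
  \sum_(tx <- tx_of Sel omega ustar U) tx_len q r I tx
    = cfac R #|nonselfish Sel U| * bl K q r I (#|U|.-1).
Proof.
move=> q0 q1 r0 I0 hU2 hT husT.
have bl0 : 0 <= bl K q r I (#|U|.-1).
  rewrite /bl; apply: mulr_ge0; last by apply: divr_ge0; apply: ltW.
  by apply: mulr_ge0; apply: exprn_ge0; rewrite ?subr_ge0.
set us := ustar U in husT *.
have husU : us \in U by move: husT; rewrite /nonselfish inE => /andP[].
have cardD : forall v, v \in U -> #|U :\ v| = (#|U|.-1)%N.
  by move=> v hv; rewrite (cardsD1 v U) hv.
have hblen : forall v, v \in U -> blen q r I (U :\ v) = bl K q r I (#|U|.-1).
  by move=> v hv; rewrite /blen /bl cardD.
case: (eqVneq #|nonselfish Sel U| 1%N) => ht.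
  rewrite /tx_of ht eqxx big_seq1 /cfac eqxx mul1r /tx_len /=.
  apply: max_const => //.
    move=> x /mapP [v hv ->]; rewrite /tset /tparts /= divr1 hblen //.
    by move: hv; rewrite mem_enum inE => /andP[].
  by rewrite size_map -cardE cardD //; lia.
set t := #|nonselfish Sel U| in ht *.
have ht2 : (1 < t)%N by move: hT; rewrite -card_gt0 -/t => h; lia.
set Tr := enum (nonselfish Sel U :\ us).
have hsz : size Tr = t.-1.
  have e := cardsD1 us (nonselfish Sel U); rewrite husT in e.
  by rewrite /Tr -cardE /t e.
have hTrU : forall w, w \in Tr -> w \in U.
  by move=> w; rewrite mem_enum /nonselfish !inE => /and3P[].
have htx : tx_of Sel omega ustar U =
  (us, [seq (omega w, U :\ w, t.-1, index w Tr) | w <- Tr])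
    :: [seq (u, [seq (omega v, U :\ v, t.-1, index u Tr) | v <- enum (U :\ u)])
       | u <- Tr].
  by rewrite /tx_of (negbTE ht).
have hlen : forall (snd : 'I_K) (s : seq 'I_K) (o : 'I_K -> nat),
    {subset s <= U} -> (0 < size s)%N ->
    tx_len q r I (snd, [seq (omega w, U :\ w, t.-1, o w) | w <- s])
      = bl K q r I (#|U|.-1) / (t.-1)%:R.
  move=> snd s o hs hs0; rewrite /tx_len /=; apply: max_const.
  - by apply: divr_ge0.
  - by move=> x /mapP [v hv ->]; rewrite /tset /tparts /= hblen // hs.
  - by rewrite size_map.
rewrite htx big_cons big_map.
rewrite (hlen us Tr (fun w => index w Tr)) //; last by rewrite hsz; lia.
rewrite (@sum_const_seq R _ _ _ (bl K q r I (#|U|.-1) / (t.-1)%:R)); last first.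
  move=> w hw; apply: (hlen w (enum (U :\ w)) (fun _ => index w Tr)).
    by move=> v; rewrite mem_enum inE => /andP[].
  by rewrite -cardE cardD ?hTrU //; lia.
rewrite hsz /cfac (negbTE ht) -mulrS prednK; last by lia.
by rewrite -mulr_natl; ring.
Qed.


Lemma root_eq (R : realFieldType) (K S N : nat) (M r : R) :
  root_poly K S N M r = 0 -> 1 - (1 - M * r / N%:R) ^+ (K - S) = r.
Proof.
rewrite /root_poly.
set q := M * r / N%:R.
case En: (K - S)%N => [|n].
  by rewrite big_ord0 add0r => /eqP; rewrite oner_eq0.
move=> h.
have e : r * (\sum_(i < n.+1) ('C(n.+1, i))%:R * (- (M / N%:R)) ^+ (n.+1 - i)
                     * r ^+ (n.+1 - 1 - i) + 1) = (1 - q) ^+ n.+1 - 1 + r.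
  rewrite mulrDr mulr1 big_distrr /=.
  congr (_ + _).
  rewrite [1 - q]addrC exprDn [X in _ = X - 1]big_ord_recr /= subnn expr0 expr1n binn mul1r mulr1n addrK.
  apply: eq_bigr => i _.
  have hi : (0 < n.+1 - i)%N by have := ltn_ord i; lia.
  have -> : (n.+1 - 1 - i = (n.+1 - i).-1)%N by lia.
  set m := (n.+1 - i)%N in hi *.
  have hr : r * r ^+ m.-1 = r ^+ m by rewrite -exprS prednK.
  have hq : - q = - (M / N%:R) * r by rewrite /q mulNr mulrAC.
  rewrite expr1n mulr1 -mulr_natr hq exprMn -hr; ring.
rewrite h mulr0 in e.
move: e; set X := (1 - q) ^+ n.+1 => e.
lra.
Qed.

Definition Hf (K : nat) {R : realFieldType} (q r I : R) (i j : nat) : R :=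
  if (1 < i)%N && (j < i)%N then cfac R (i - j) * bl K q r I i.-1 else 0.

Lemma inner (R : realFieldType) (K S : nat) (q r I : R) (i : nat) : (i < K.+1)%N ->
  \sum_(j < K.+1) ('C(S, j) * 'C(K - S, i - j))%:R * Hf K q r I i j
  = if (1 < i)%N then Rcoef R K S i * q ^+ i.-1 * (1 - q) ^+ (K - i + 1) * (I / r) else 0.
Proof.
move=> hiK.
case: ifP => hi; last first.
  by rewrite big1 // => j _; rewrite /Hf hi /= mulr0.
rewrite -(big_mkord xpredT (fun j => ('C(S, j) * 'C(K - S, i - j))%:R * Hf K q r I i j)).
rewrite (big_cat_nat _ (n:=i)) //=; last by lia.
rewrite [X in _ + X]big1_seq ?addr0; last first.
  move=> j /andP[_]; rewrite mem_index_iota => /andP[hj _].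
  by rewrite /Hf [(j < i)%N]ltnNge hj andbF mulr0.
case: i hiK hi => [//|i'] hiK hi.
rewrite big_nat_recr //= /Rcoef /=.
rewrite !mulrDl !big_distrl /=.
congr (_ + _).
  apply: eq_big_nat => j /andP[_ hj].
  rewrite /Hf hi /= ltnS (ltnW hj) /cfac.
  have -> : (i'.+1 - j == 1)%N = false by apply/negbTE; lia.
  rewrite -subn1 /bl.
  have -> : (K - i'.+1 + 1 = K - i')%N by lia.
  by rewrite /=; ring.
rewrite /Hf hi /= ltnSn /cfac.
have -> : (i'.+1 - i' = 1)%N by lia.
rewrite eqxx bin1 /bl.
have -> : (K - i'.+1 + 1 = K - i')%N by lia.
by rewrite natrM /=; ring.
Qed.

Lemma partition_card (R : realFieldType) (T : finType) (P : pred {set T})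
  (f : {set T} -> nat) (G : {set T} -> R) (n : nat) :
  (forall U, P U -> (f U <= n)%N) ->
  \sum_(U | P U) G U = \sum_(k < n.+1) \sum_(U | P U && (f U == k)) G U.
Proof.
move=> hf.
rewrite (partition_big (fun U => (inord (f U) : 'I_n.+1)) predT) //=.
apply: eq_bigr => k _; apply: eq_bigl => U.
case hP: (P U) => //=.
by rewrite -val_eqE /= inordK // ltnS hf.
Qed.

Lemma served_iff (K : nat) (Sel U : {set 'I_K}) :
  (2 <= #|U|)%N && (nonselfish Sel U != set0) = (1 < #|U|)%N && (#|U :&: Sel| < #|U|)%N.
Proof.
rewrite /nonselfish -card_gt0 -(cardsID Sel U).
move: #|U :&: Sel| #|U :\: Sel| => a b.
by apply/idP/idP => /andP [h1 h2]; apply/andP; split; lia.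
Qed.

Lemma rate_eq (K N : nat) (Sel : {set 'I_K}) (omega : 'I_K -> 'I_N)
  (ustar : {set 'I_K} -> 'I_K) (R : realFieldType) (q r I : R) (S : nat) :
  #|Sel| = S -> 0 <= q -> q <= 1 -> 0 < r -> 0 < I ->
  (forall U, nonselfish Sel U != set0 -> ustar U \in nonselfish Sel U) ->
  rate Sel omega ustar q r I =
  r^-1 * \sum_(2 <= i < K.+1) Rcoef R K S i * q ^+ i.-1 * (1 - q) ^+ (K - i + 1).
Proof.
move=> hS q0 q1 r0 I0 hstar.
rewrite /rate /delivery big_flatten big_map /served_sets big_filter big_enum_cond /=.
have step : \sum_(U in [set: {set 'I_K}] | (2 <= #|U|)%N && (nonselfish Sel U != set0))
     \sum_(tx <- tx_of Sel omega ustar U) tx_len q r I tx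
   = \sum_(U : {set 'I_K}) Hf K q r I #|U| #|U :&: Sel|.
  rewrite big_mkcond; apply: eq_bigr => U _; rewrite in_setT /=.
  case hs: ((2 <= #|U|)%N && (nonselfish Sel U != set0)).
    move: (hs) => /andP[hU2 hT].
    rewrite tx_sum //; last exact: hstar.
    move: hs; rewrite served_iff /Hf => ->.
    congr (cfac R _ * _).
    by rewrite /nonselfish -(cardsID Sel U) addKn.
  by move: hs; rewrite served_iff /Hf => ->.
rewrite step.
rewrite (@partition_card R _ xpredT (fun U => #|U|) _ K); last first.
  by move=> U _; rewrite -[X in (_ <= X)%N](card_ord K) max_card.
have step2 : forall i : 'I_K.+1,
    \sum_(U : {set 'I_K} | true && (#|U| == i)) Hf K q r I #|U| #|U :&: Sel|
    = if (1 < i)%N then Rcoef R K S i * q ^+ i.-1 * (1 - q) ^+ (K - i + 1) * (I / r) else 0.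
  move=> i.
  rewrite -(@inner R K S q r I i (ltn_ord i)).
  transitivity (\sum_(U : {set 'I_K} | #|U| == i) Hf K q r I i #|U :&: Sel|).
    by apply: eq_big => // U /= /eqP ->.
  rewrite (@sum_by_card R _ (fun U : {set 'I_K} => #|U| == i) (fun U => #|U :&: Sel|) _ K).
    apply: eq_bigr => j _.
    case hji: (j < i)%N.
      by rewrite count_split ?hS // ltnW.
    by rewrite /Hf hji andbF !mulr0.
  by move=> U _; rewrite -[X in (_ <= X)%N](card_ord K) max_card.
rewrite (eq_bigr _ (fun i _ => step2 i)).
rewrite -(big_mkord xpredT (fun i => if (1 < i)%N then Rcoef R K S i * q ^+ i.-1 * (1 - q) ^+ (K - i + 1) * (I / r) else 0)).
have [K0|Kpos] := posnP K.
  by rewrite K0 big_nat1 big_geq //= mul0r mulr0.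
rewrite (big_cat_nat _ (n:=2)) //=.
rewrite [X in (X + _)]big1_seq ?add0r; last first.
  by move=> i /andP[_]; rewrite mem_index_iota => /andP[_ hi]; case: i hi => [|[|]].
rewrite (eq_big_nat _ _ (F2 := fun i => Rcoef R K S i * q ^+ i.-1 * (1 - q) ^+ (K - i + 1) * (I / r))); last first.
  by move=> i /andP[hi _]; rewrite hi.
rewrite -big_distrl /=.
have I0' : I != 0 by apply: lt0r_neq0.
have r0' : r != 0 by apply: lt0r_neq0.
by field; rewrite r0' I0'.
Qed.

Theorem theorem4 (R : realFieldType) (K S N : nat) (M r I : R)
  (Sel : {set 'I_K}) (omega : 'I_K -> 'I_N) (ustar : {set 'I_K} -> 'I_K) :
  #|Sel| = S ->
  (0 < N)%N -> 0 <= M -> M <= N%:R ->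
  0 < r -> r < 1 ->
  root_poly K S N M r = 0 ->
  1 < M * (K - S)%:R / N%:R ->
  (forall U, nonselfish Sel U != set0 -> ustar U \in nonselfish Sel U) ->
  0 < I ->
  (forall u : 'I_K,
     I <= known Sel omega ustar (M * r / N%:R) r I u) /\
  rate Sel omega ustar (M * r / N%:R) r I = rate_formula K S N M r.
Proof.
move=> hS N0 M0 MN r0 r1 hroot hM hstar I0.
have hr := root_eq _ _ _ _ _ _ hroot.
have q0 : 0 <= M * r / N%:R.
  by apply: divr_ge0; [apply: mulr_ge0 => //; apply: ltW | apply: ler0n].
have q1 : M * r / N%:R <= 1.
  rewrite ler_pdivrMr ?ltr0n // mul1r; apply: le_trans MN.
  rewrite -[X in _ <= X]mulr1; apply: ler_wpM2l => //; exact: ltW.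
split.
  by move=> u; apply: (known_ge _ _ _ _ _ _ _ _ _ _ _ hS q0 q1 r0 I0 hr hstar).
by rewrite (rate_eq _ _ _ _ _ _ _ _ _ _ hS q0 q1 r0 I0 hstar).
Qed.
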